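(* Let $L$ be an infinite set and consider the edged cube $\bar Q_L$. Let $f$ be a legal configuration accessible from $f_{\mathrm{solved}}$. Then for each pair $\gamma,\gamma'$ of colors and each cluster $C$ consisting of edge cells, other than the corner cluster, there is at most one pair of coupled edge cells $c,c'$ with $c\in C$, $f(c)=\gamma$ and $f(c')=\gamma'$. Similarly, for each triple $\gamma,\gamma',\gamma''$ of colors, there is at most one triple of mutually coupled corner cells whose colors under $f$ are $\gamma,\gamma',\gamma''$.
   Context: Let $L$ be an infinite set, $-L=\{-r:r\in L\}$ a disjoint copy of $L$, and $0$ a new element; $L^\dagger=-L\cup\{0\}\cup L$ with $-(-r)=r$, $-0=0$. Adjoin $\pm\infty$ with $-(+\infty)=-\infty$ and set $\bar L^\dagger=L^\dagger\cup\{\pm\infty\}$. Points of $U=(\bar L^\dagger)^3$ have coordinates $x,y,z$. The edged cube $\bar Q_L$ is the set of cells $(p,i)$ with $p\in U$, $i\in\{x,y,z\}$, $p_i\in\{\pm\infty\}$ ($i$ marks the face of the cell). Cells whose point has exactly two (resp. three) coordinates in $\{\pm\infty\}$ are edge (resp. corner) cells; distinct cells with the same underlying point are coupled (two coupled cells at each edge point, three mutually coupled cells at each corner point). For $i\in\{x,y,z\}$, $\alpha\in\bar L^\dagger$, the quarter-turn twist $T_{i,\alpha}$ is the permutation of cells fixing every cell whose point $p$ has $p_i\ne\alpha$ and acting on the others by the rotation $T_{x,\alpha}(\alpha,y,z)=(\alpha,-z,y)$, $T_{y,\alpha}(x,\alpha,z)=(z,\alpha,-x)$, $T_{z,\alpha}(x,y,\alpha)=(-y,x,\alpha)$,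 the marked coordinate being carried along by the rotation. Basic twists are $T,T^2,T^3$ for quarter-turn twists $T$. A basic sequence is a sequence $\langle\sigma_\eta:\eta<\theta\rangle$ of basic twists of ordinal length $\theta$. A configuration is a map $f$ from cells to the six colors red, white, green, orange, yellow, blue together with a special value NaC; it is legal if it never takes value NaC. The solved configuration $f_{\mathrm{solved}}$ colors cell $(p,i)$ red, blue, white, orange, green, yellow according as $p_i=+\infty$ with $i=x,y,z$, or $p_i=-\infty$ with $i=x,y,z$. A twist $\sigma$ acts by $(\sigma f)(c)=f(\sigma^{-1}c)$. Applying $\langle\sigma_\eta:\eta<\theta\rangle$ to $f_0$ produces $f_{\eta+1}=\sigma_\eta f_\eta$, and for limit $\lambda\le\theta$, $f_\lambda(c)$ is the eventually constant value of $f_\eta(c)$ ($\eta<\lambda$) if it exists and NaC otherwise; $f_\theta$ is the terminal configuration. $f$ is accessible from $f_0$ if it is the terminal configuration of some basic sequence applied to $f_0$. The cluster of a cell is its orbit under the group generated by all quarter-turn twists; the corner cluster is the set of all corner cells. *)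

(* Defs.v *)
From Stdlib Require Import List Bool ClassicalDescription.
Set Implicit Arguments.

Inductive Ldag (L : Type) := LNeg (r : L) | LZero | LPos (r : L).
Arguments LZero {L}.
Definition ldneg {L} (a : Ldag L) : Ldag L :=
  match a with LNeg r => LPos r | LZero => LZero | LPos r => LNeg r end.

Inductive Lbar (L : Type) := LFin (a : Ldag L) | PInf | NInf.
Arguments PInf {L}. Arguments NInf {L}.
Definition lbneg {L} (x : Lbar L) : Lbar L :=
  match x with LFin a => LFin (ldneg a) | PInf => NInf | NInf => PInf end.
Definition isInf {L} (x : Lbar L) : bool :=
  match x with LFin _ => false | _ => true end.

Inductive axis := AX | AY | AZ.

Definition point (L : Type) := (Lbar L * Lbar L * Lbar L)%type.
Definition coord {L} (p : point L) (i : axis) : Lbar L :=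
  match p, i with
  | (x, _, _), AX => x | (_, y, _), AY => y | (_, _, z), AZ => z end.

Definition cell (L : Type) :=
  { c : point L * axis | isInf (coord (fst c) (snd c)) = true }.
Definition cpt {L} (c : cell L) : point L := fst (proj1_sig c).
Definition cax {L} (c : cell L) : axis := snd (proj1_sig c).

Definition num_inf {L} (p : point L) : nat :=
  (if isInf (coord p AX) then 1 else 0) + (if isInf (coord p AY) then 1 else 0)
  + (if isInf (coord p AZ) then 1 else 0).
Definition is_edge {L} (c : cell L) : Prop := num_inf (cpt c) = 2.
Definition is_corner {L} (c : cell L) : Prop := num_inf (cpt c) = 3.
Definition coupled {L} (c c' : cell L) : Prop := c <> c' /\ cpt c = cpt c'.

Definition rot_pt {L} (i : axis) (p : point L) : point L :=
  match p with (x, y, z) =>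
  match i with
  | AX => (x, lbneg z, y)
  | AY => (z, y, lbneg x)
  | AZ => (lbneg y, x, z)
  end end.
(* where the marked coordinate is carried *)
Definition rot_ax (i j : axis) : axis :=
  match i, j with
  | AX, AY => AZ | AX, AZ => AY
  | AY, AX => AZ | AY, AZ => AX
  | AZ, AX => AY | AZ, AY => AX
  | _, j => j end.

Lemma isInf_lbneg {L} (x : Lbar L) : isInf (lbneg x) = isInf x.
Proof. destruct x; reflexivity. Qed.

Lemma rot_isInf {L} (i j : axis) (p : point L) :
  isInf (coord (rot_pt i p) (rot_ax i j)) = isInf (coord p j).
Proof.
  destruct p as [[x y] z]; destruct i, j; simpl; rewrite ?isInf_lbneg; reflexivity.
Qed.

Definition qturn {L} (i : axis) (alpha : Lbar L) (c : cell L) : cell L :=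
  match excluded_middle_informative (coord (cpt c) i = alpha) with
  | left _ =>
      exist _ (rot_pt i (cpt c), rot_ax i (cax c))
            (eq_trans (rot_isInf i (cax c) (cpt c)) (proj2_sig c))
  | right _ => c
  end.

(* colors; a configuration takes values in option color, None = NaC *)
Inductive color := Red | White | Green | Orange | Yellow | Blue.
Definition config (L : Type) := cell L -> option color.
Definition legal {L} (f : config L) : Prop := forall c, f c <> None.

Definition f_solved {L} : config L := fun c =>
  match coord (cpt c) (cax c), cax c with
  | PInf, AX => Some Red  | PInf, AY => Some Blue   | PInf, AZ => Some White
  | NInf, AX => Some Orange | NInf, AY => Some Green | NInf, AZ => Some Yellow
  | LFin _, _ => None (* impossible for a cell *)
  end.

Inductive power := P1 | P2 | P3.
Definition pow_nat (k : power) : nat := match k with P1 => 1 | P2 => 2 | P3 => 3 end.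
Record btwist (L : Type) := BTwist { bt_axis : axis; bt_level : Lbar L; bt_pow : power }.
Definition bt_perm {L} (s : btwist L) (c : cell L) : cell L :=
  Nat.iter (pow_nat (bt_pow s)) (qturn (bt_axis s) (bt_level s)) c.
(* inverse permutation: T^{-k} = T^{4-k} since T^4 = id (rot_pt i is of order 4 and fixes coordinate i) *)
Definition bt_perm_inv {L} (s : btwist L) (c : cell L) : cell L :=
  Nat.iter (4 - pow_nat (bt_pow s)) (qturn (bt_axis s) (bt_level s)) c.
Definition act {L} (s : btwist L) (f : config L) : config L :=
  fun c => f (bt_perm_inv s c).

(* ordinals are represented by (strict) well-orders: a basic sequence of
   length theta is indexed by a well-ordered type W of order type theta;
   stages 0..theta are indexed by option W (Some w = stage w, None = theta) *)
Definition is_wellorder {W : Type} (lt : W -> W -> Prop) : Prop :=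
  (forall x, ~ lt x x) /\ (forall x y z, lt x y -> lt y z -> lt x z) /\
  (forall x y, lt x y \/ x = y \/ lt y x) /\ well_founded lt.

Definition below {W} (lt : W -> W -> Prop) (w : W) (s : option W) : Prop :=
  match s with Some v => lt w v | None => True end.
Definition is_max_below {W} (lt : W -> W -> Prop) (w : W) (s : option W) : Prop :=
  below lt w s /\ forall w', below lt w' s -> w' = w \/ lt w' w.
Definition ev_const {L W} (lt : W -> W -> Prop) (g : option W -> config L)
  (s : option W) (c : cell L) (v : option color) : Prop :=
  exists w0, below lt w0 s /\
    forall w, below lt w s -> (w = w0 \/ lt w0 w) -> g (Some w) c = v.

Definition is_run {L W} (lt : W -> W -> Prop) (sigma : W -> btwist L)
  (f0 : config L) (g : option W -> config L) : Prop :=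
  forall s : option W,
    ((forall w, ~ below lt w s) -> g s = f0) /\
    (forall w, is_max_below lt w s -> g s = act (sigma w) (g (Some w))) /\
    ((exists w, below lt w s) -> (forall w, ~ is_max_below lt w s) ->
       forall c, (forall v, ev_const lt g s c v -> g s c = v) /\
                 ((forall v, ~ ev_const lt g s c v) -> g s c = None)).

Definition accessible {L} (f0 f : config L) : Prop :=
  exists (W : Type) (lt : W -> W -> Prop) (sigma : W -> btwist L)
         (g : option W -> config L),
    is_wellorder lt /\ is_run lt sigma f0 g /\ f = g None.

(* cluster: orbit under the group generated by the quarter-turn twists
   (closure under the T's suffices since T^{-1} = T^3) *)
Inductive cluster {L} (c : cell L) : cell L -> Prop :=
  | cl_refl : cluster c c
  | cl_step : forall d i alpha, cluster c d -> cluster c (qturn i alpha d).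

Definition infinite_type (L : Type) : Prop :=
  ~ exists l : list L, forall x : L, In x l.

(* Main.v *)
Require Import Defs.
From Stdlib Require Import List Bool ClassicalDescription Classical Eqdep_dec.
Import ListNotations.

Lemma cell_eq {L} (c d : cell L) : proj1_sig c = proj1_sig d -> c = d.
Proof.
  destruct c as [x hx], d as [y hy]; simpl; intros ->. f_equal.
  apply UIP_dec. exact bool_dec.
Qed.

Definition sb {L} (x : Lbar L) : bool := match x with PInf => true | _ => false end.
Definition fp {L} (a : Ldag L) (b : bool) : option (L * bool) :=
  match a with LNeg r => Some (r, negb b) | LZero => None | LPos r => Some (r, b) end.
Definition par (m k : axis) : bool :=
  match m, k with AX, AY | AY, AZ | AZ, AX => true | _, _ => false end.
Definition inv_e {L} (p : point L) (m : axis) : option (L * bool) :=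
  match p with (x, y, z) =>
  match x, y, z with
  | LFin a, _, _ => fp a (xorb (xorb (sb y) (sb z)) (par m AX))
  | _, LFin a, _ => fp a (xorb (xorb (sb x) (sb z)) (par m AY))
  | _, _, LFin a => fp a (xorb (xorb (sb x) (sb y)) (par m AZ))
  | _, _, _ => None end end.

Lemma inv_rot {L} i (p : point L) m : isInf (coord p m) = true -> num_inf p = 2 ->
  inv_e (rot_pt i p) (rot_ax i m) = inv_e p m.
Proof.
  destruct p as [[x y] z]; destruct i, m;
  destruct x as [[]| |], y as [[]| |], z as [[]| |]; simpl; intros; try discriminate; reflexivity.
Qed.

Lemma num_rot {L} i (p : point L) : num_inf (rot_pt i p) = num_inf p.
Proof.
  destruct p as [[x y] z]; destruct i;
  destruct x as [[]| |], y as [[]| |], z as [[]| |]; reflexivity.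
Qed.

Definition col {L} (x : Lbar L) (m : axis) : option color :=
  match x, m with
  | PInf, AX => Some Red  | PInf, AY => Some Blue   | PInf, AZ => Some White
  | NInf, AX => Some Orange | NInf, AY => Some Green | NInf, AZ => Some Yellow
  | LFin _, _ => None end.

Lemma col_inj {L} (x y : Lbar L) m n : isInf x = true -> isInf y = true ->
  col x m = col y n -> x = y /\ m = n.
Proof. destruct x, y, m, n; simpl; intros; try discriminate; auto. Qed.

Lemma edge_pt {L} (p q : point L) m n : m <> n -> coord p m = coord q m ->
  coord p n = coord q n -> isInf (coord p m) = true -> isInf (coord p n) = true ->
  num_inf p = 2 -> num_inf q = 2 -> inv_e p m = inv_e q m -> p = q.
Proof.
  destruct p as [[x y] z], q as [[x' y'] z']; destruct m, n; simpl;
  intros Hmn H1 H2; try (exfalso; now apply Hmn); subst;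
  repeat match goal with v : Lbar L |- _ => destruct v as [[]| |] end;
  simpl in *; intros; try discriminate; congruence.
Qed.

Lemma cpt_qturn {L} i a (c : cell L) : cpt (qturn i a c) =
  if excluded_middle_informative (coord (cpt c) i = a) then rot_pt i (cpt c) else cpt c.
Proof. unfold qturn; destruct excluded_middle_informative; reflexivity. Qed.

Lemma cax_qturn {L} i a (c : cell L) : cax (qturn i a c) =
  if excluded_middle_informative (coord (cpt c) i = a) then rot_ax i (cax c) else cax c.
Proof. unfold qturn; destruct excluded_middle_informative; reflexivity. Qed.

Lemma coord_rot_same {L} i (p : point L) : coord (rot_pt i p) i = coord p i.
Proof. destruct p as [[x y] z]; destruct i; reflexivity. Qed.

Lemma lbneg_inv {L} (x : Lbar L) : lbneg (lbneg x) = x.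
Proof. destruct x as [[]| |]; reflexivity. Qed.

Lemma rot_pt_inj {L} i (p q : point L) : rot_pt i p = rot_pt i q -> p = q.
Proof.
  destruct p as [[x y] z], q as [[x' y'] z']; destruct i; simpl; intro H;
  injection H; intros; subst;
  repeat match goal with H : lbneg _ = lbneg _ |- _ =>
    apply (f_equal lbneg) in H; rewrite !lbneg_inv in H; subst end; reflexivity.
Qed.

Lemma rot_ax_inj i m n : rot_ax i m = rot_ax i n -> m = n.
Proof. destruct i, m, n; simpl; congruence. Qed.

Lemma qturn_inj {L} i a (c d : cell L) : qturn i a c = qturn i a d -> c = d.
Proof.
  intro H.
  assert (Hp := f_equal cpt H). assert (Ha := f_equal cax H).
  rewrite !cpt_qturn in Hp. rewrite !cax_qturn in Ha.
  destruct (excluded_middle_informative (coord (cpt c) i = a)) as [e1|n1];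
  destruct (excluded_middle_informative (coord (cpt d) i = a)) as [e2|n2].
  - apply cell_eq. apply rot_pt_inj in Hp. apply rot_ax_inj in Ha.
    destruct c as [[p m] hc], d as [[q n] hd]; unfold cpt, cax in *; simpl in *; congruence.
  - exfalso; apply n2. rewrite <- Hp, coord_rot_same. exact e1.
  - exfalso; apply n1. rewrite Hp, coord_rot_same. exact e2.
  - apply cell_eq. destruct c as [[p m] hc], d as [[q n] hd]; unfold cpt, cax in *; simpl in *; congruence.
Qed.

Lemma num_qturn {L} i a (c : cell L) : num_inf (cpt (qturn i a c)) = num_inf (cpt c).
Proof. rewrite cpt_qturn; destruct excluded_middle_informative; auto using num_rot. Qed.

Lemma cpt_qturn_eq {L} i a (c d : cell L) : cpt c = cpt d -> cpt (qturn i a c) = cpt (qturn i a d).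
Proof. intro H; rewrite !cpt_qturn, H; reflexivity. Qed.

Record good {L} (s : cell L -> cell L) : Prop := {
  g_inj : forall c d, s c = s d -> c = d;
  g_cl : forall c0 d, cluster c0 d -> cluster c0 (s d);
  g_num : forall c, num_inf (cpt (s c)) = num_inf (cpt c);
  g_cpt : forall c d, cpt c = cpt d -> cpt (s c) = cpt (s d) }.

Lemma good_qturn {L} i a : good (@qturn L i a).
Proof.
  split.
  - apply qturn_inj.
  - intros; now constructor.
  - apply num_qturn.
  - apply cpt_qturn_eq.
Qed.

Lemma good_iter {L} n (s : cell L -> cell L) : good s -> good (Nat.iter n s).
Proof.
  intro G; induction n; simpl; split; auto.
  - intros c d H. apply (g_inj _ IHn). apply (g_inj _ G). exact H.
  - intros. apply (g_cl _ G). apply (g_cl _ IHn). auto.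
  - intros; simpl. rewrite (g_num _ G). apply (g_num _ IHn).
  - intros. apply (g_cpt _ G). apply (g_cpt _ IHn). auto.
Qed.

Lemma good_bt {L} (s : btwist L) : good (bt_perm_inv s).
Proof. apply good_iter, good_qturn. Qed.

Definition Pg {L X} (pre : X -> Prop) (lst : X -> list (cell L * color)) (concl : X -> Prop)
  (f : config L) : Prop :=
  forall x, pre x -> (forall cv, In cv (lst x) -> f (fst cv) = Some (snd cv)) -> concl x.

Lemma agree_list {L W} (lt : W -> W -> Prop) (g : option W -> config L) s
  (Hwo : is_wellorder lt) (Hlim : forall c, (forall v, ev_const lt g s c v -> g s c = v) /\
                 ((forall v, ~ ev_const lt g s c v) -> g s c = None))
  (w00 : W) (H00 : below lt w00 s) (l : list (cell L * color)) :
  (forall cv, In cv l -> g s (fst cv) <> None) ->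
  exists w, below lt w s /\ forall w', below lt w' s -> (w' = w \/ lt w w') ->
     forall cv, In cv l -> g (Some w') (fst cv) = g s (fst cv).
Proof.
  destruct Hwo as [Hirr [Htr [Htot _]]].
  induction l as [|cv l IH]; intro Hn.
  - exists w00; split; auto. intros; contradiction.
  - destruct IH as [w1 [Hb1 H1]]. { intros; apply Hn; right; auto. }
    assert (Hex : exists v, ev_const lt g s (fst cv) v).
    { apply NNPP; intro Hno. apply (Hn cv (or_introl eq_refl)).
      apply (proj2 (Hlim (fst cv))). intros v Hv; apply Hno; eauto. }
    destruct Hex as [v Hv].
    assert (Hgv := proj1 (Hlim (fst cv)) v Hv).
    destruct Hv as [w0 [Hb0 H0]].
    assert (Hm : exists w, below lt w s /\ (w = w0 \/ lt w0 w) /\ (w = w1 \/ lt w1 w)).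
    { destruct (Htot w0 w1) as [h|[h|h]].
      - exists w1; auto.
      - subst; exists w1; auto.
      - exists w0; auto. }
    destruct Hm as [w [Hb [Hw0 Hw1]]].
    exists w; split; auto.
    intros w' Hb' Hw' cv' Hin.
    assert (T : forall a, (w = a \/ lt a w) -> (w' = a \/ lt a w')).
    { intros a [<-|h]; destruct Hw' as [<-|h']; auto. right; eauto. }
    destruct Hin as [<-|Hin].
    + rewrite Hgv. apply H0; auto.
    + apply H1; auto.
Qed.

Lemma run_inv {L W X} (lt : W -> W -> Prop) sigma (f0 : config L) g
  (pre : X -> Prop) lst concl :
  is_wellorder lt -> is_run lt sigma f0 g ->
  Pg pre lst concl f0 -> (forall s f, Pg pre lst concl f -> Pg pre lst concl (act s f)) ->
  Pg pre lst concl (g None).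
Proof.
  intros Hwo Hrun H0 Hs.
  assert (Step : forall s, (forall w, below lt w s -> Pg pre lst concl (g (Some w))) ->
                 Pg pre lst concl (g s)).
  { intros s IH. destruct (Hrun s) as [R1 [R2 R3]].
    destruct (classic (exists w, below lt w s)) as [Hex|Hno].
    - destruct (classic (exists w, is_max_below lt w s)) as [[w Hw]|Hnm].
      + rewrite (R2 w Hw). apply Hs, IH, Hw.
      + assert (Hlim := R3 Hex (fun w h => Hnm (ex_intro _ w h))).
        destruct Hex as [w00 H00].
        intros x Hpre Hin.
        destruct (agree_list lt g s Hwo Hlim w00 H00 (lst x)) as [w [Hb Hag]].
        { intros cv h; rewrite (Hin cv h); discriminate. }
        apply (IH w Hb x Hpre). intros cv h.
        rewrite (Hag w Hb (or_introl eq_refl) cv h). auto.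
    - rewrite R1; auto. intros w h; apply Hno; eauto. }
  assert (All : forall w, Pg pre lst concl (g (Some w))).
  { destruct Hwo as [_ [_ [_ Hwf]]]. intro w. induction w as [w IHw] using (well_founded_ind Hwf).
    apply Step. exact IHw. }
  apply Step. intros; apply All.
Qed.

Lemma cell_eq2 {L} (c d : cell L) : cpt c = cpt d -> cax c = cax d -> c = d.
Proof.
  intros H1 H2; apply cell_eq. destruct c as [[p m] hc], d as [[q n] hd];
  unfold cpt, cax in *; simpl in *; congruence.
Qed.

Lemma solved_col {L} (c : cell L) : f_solved c = col (coord (cpt c) (cax c)) (cax c).
Proof. reflexivity. Qed.

Lemma solved_eq {L} (c d : cell L) : f_solved c = f_solved d ->
  coord (cpt c) (cax c) = coord (cpt d) (cax d) /\ cax c = cax d.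
Proof.
  rewrite !solved_col. apply col_inj; [exact (proj2_sig c)|exact (proj2_sig d)].
Qed.

Lemma coupled_ax {L} (c d : cell L) : coupled c d -> cax c <> cax d.
Proof. intros [Hn Hp] Ha. apply Hn, cell_eq2; auto. Qed.

Lemma cluster_inv {L} (c0 : cell L) : (forall d, cluster c0 d -> is_edge d) ->
  forall d, cluster c0 d -> inv_e (cpt d) (cax d) = inv_e (cpt c0) (cax c0).
Proof.
  intros He d Hd. induction Hd as [|d i a Hd IH]; auto.
  rewrite cpt_qturn, cax_qturn. destruct excluded_middle_informative; auto.
  rewrite inv_rot; auto. apply (proj2_sig d). apply He; auto.
Qed.

Lemma pt3 {L} (p q : point L) a1 a2 a3 : a1 <> a2 -> a1 <> a3 -> a2 <> a3 ->
  coord p a1 = coord q a1 -> coord p a2 = coord q a2 -> coord p a3 = coord q a3 -> p = q.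
Proof.
  destruct p as [[x y] z], q as [[x' y'] z']; destruct a1, a2, a3; simpl; intros; congruence.
Qed.

Definition edgeX (L : Type) := (cell L * cell L * cell L * cell L)%type.

Lemma edge_part {L W} (lt : W -> W -> Prop) sigma g (g1 g2 : color) (c0 : cell L) :
  is_wellorder lt -> is_run lt sigma f_solved g ->
  (forall d, cluster c0 d -> is_edge d) ->
  Pg (fun x : edgeX L => let '(c1, c1', c2, c2') := x in
        cluster c0 c1 /\ is_edge c1 /\ is_edge c1' /\ coupled c1 c1' /\
        cluster c0 c2 /\ is_edge c2 /\ is_edge c2' /\ coupled c2 c2')
     (fun x => let '(c1, c1', c2, c2') := x in [(c1, g1); (c1', g2); (c2, g1); (c2', g2)])
     (fun x => let '(c1, c1', c2, c2') := x in c1 = c2 /\ c1' = c2') (g None).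
Proof.
  intros Hwo Hrun Hc0. apply (run_inv lt sigma f_solved); auto.
  - intros [[[c1 c1'] c2] c2'] [Hk1 [He1 [He1' [Hcp1 [Hk2 [He2 [He2' Hcp2]]]]]]] Hin.
    assert (F1 := Hin _ (or_introl eq_refl)).
    assert (F1' := Hin _ (or_intror (or_introl eq_refl))).
    assert (F2 := Hin _ (or_intror (or_intror (or_introl eq_refl)))).
    assert (F2' := Hin _ (or_intror (or_intror (or_intror (or_introl eq_refl))))).
    simpl in F1, F1', F2, F2'.
    destruct (solved_eq c1 c2) as [Q1 A1]; [congruence|].
    destruct (solved_eq c1' c2') as [Q2 A2]; [congruence|].
    assert (Hn := coupled_ax _ _ Hcp1).
    destruct Hcp1 as [_ P1], Hcp2 as [_ P2].
    assert (Hpq : cpt c1 = cpt c2).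
    { apply (edge_pt _ _ (cax c1) (cax c1')).
      - exact Hn.
      - now rewrite <- A1 in Q1.
      - rewrite <- P1, <- P2, <- A2 in Q2; exact Q2.
      - exact (proj2_sig c1).
      - rewrite P1; exact (proj2_sig c1').
      - exact He1.
      - exact He2.
      - rewrite (cluster_inv c0 Hc0 c1 Hk1), A1, (cluster_inv c0 Hc0 c2 Hk2); auto. }
    split; apply cell_eq2; congruence.
  - intros s f Hf [[[c1 c1'] c2] c2'] [Hk1 [He1 [He1' [Hcp1 [Hk2 [He2 [He2' Hcp2]]]]]]] Hin.
    pose proof (good_bt s) as G.
    assert (Hc : forall c d, coupled c d -> coupled (bt_perm_inv s c) (bt_perm_inv s d)).
    { intros c d [h1 h2]; split. intro h; apply h1, (g_inj _ G), h. apply (g_cpt _ G), h2. }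
    assert (He : forall c, is_edge c -> is_edge (bt_perm_inv s c)).
    { unfold is_edge; intros; rewrite (g_num _ G); auto. }
    destruct (Hf (bt_perm_inv s c1, bt_perm_inv s c1', bt_perm_inv s c2, bt_perm_inv s c2'))
      as [E1 E2].
    + repeat split; auto; try (apply (g_cl _ G); auto); apply Hc; auto.
    + intros cv h. simpl in h.
      destruct h as [<-|[<-|[<-|[<-|[]]]]]; match goal with |- f (fst (bt_perm_inv s ?c, ?v)) = _ => exact (Hin (c, v) ltac:(simpl; auto 7)) end.
    + split; apply (g_inj _ G); auto.
Qed.

Definition cornX (L : Type) := (cell L * cell L * cell L * cell L * cell L * cell L)%type.

Lemma corner_part {L W} (lt : W -> W -> Prop) sigma g (g1 g2 g3 : color) :
  is_wellorder lt -> is_run lt sigma f_solved g ->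
  Pg (fun x : cornX L => let '(c1, c1', c1'', c2, c2', c2'') := x in
        is_corner c1 /\ is_corner c1' /\ is_corner c1'' /\
        coupled c1 c1' /\ coupled c1 c1'' /\ coupled c1' c1'' /\
        is_corner c2 /\ is_corner c2' /\ is_corner c2'' /\
        coupled c2 c2' /\ coupled c2 c2'' /\ coupled c2' c2'')
     (fun x => let '(c1, c1', c1'', c2, c2', c2'') := x in
        [(c1, g1); (c1', g2); (c1'', g3); (c2, g1); (c2', g2); (c2'', g3)])
     (fun x => let '(c1, c1', c1'', c2, c2', c2'') := x in
        c1 = c2 /\ c1' = c2' /\ c1'' = c2'') (g None).
Proof.
  intros Hwo Hrun. apply (run_inv lt sigma f_solved); auto.
  - intros [[[[[c1 c1'] c1''] c2] c2'] c2'']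
      [_ [_ [_ [Ha [Hb [Hc [_ [_ [_ [Ha' [Hb' Hc']]]]]]]]]]] Hin.
    assert (F1 := Hin _ (or_introl eq_refl)).
    assert (F2 := Hin _ (or_intror (or_introl eq_refl))).
    assert (F3 := Hin _ (or_intror (or_intror (or_introl eq_refl)))).
    assert (F4 := Hin _ (or_intror (or_intror (or_intror (or_introl eq_refl))))).
    assert (F5 := Hin _ (or_intror (or_intror (or_intror (or_intror (or_introl eq_refl)))))).
    assert (F6 := Hin _ (or_intror (or_intror (or_intror (or_intror (or_intror (or_introl eq_refl))))))).
    simpl in F1, F2, F3, F4, F5, F6.
    destruct (solved_eq c1 c2) as [Q1 A1]; [congruence|].
    destruct (solved_eq c1' c2') as [Q2 A2]; [congruence|].
    destruct (solved_eq c1'' c2'') as [Q3 A3]; [congruence|].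
    assert (N1 := coupled_ax _ _ Ha). assert (N2 := coupled_ax _ _ Hb).
    assert (N3 := coupled_ax _ _ Hc).
    destruct Ha as [_ Pa], Hb as [_ Pb], Hc as [_ Pc], Ha' as [_ Pa'], Hb' as [_ Pb'].
    assert (Hpq : cpt c1 = cpt c2).
    { apply (pt3 _ _ (cax c1) (cax c1') (cax c1'')).
      - exact N1.
      - exact N2.
      - exact N3.
      - now rewrite <- A1 in Q1.
      - rewrite <- Pa, <- Pa', <- A2 in Q2; exact Q2.
      - rewrite <- Pb, <- Pb', <- A3 in Q3; exact Q3. }
    repeat split; apply cell_eq2; congruence.
  - intros s f Hf [[[[[c1 c1'] c1''] c2] c2'] c2'']
      [K1 [K2 [K3 [Ha [Hb [Hc [K4 [K5 [K6 [Ha' [Hb' Hc']]]]]]]]]]] Hin.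
    pose proof (good_bt s) as G.
    assert (Hcp : forall c d, coupled c d -> coupled (bt_perm_inv s c) (bt_perm_inv s d)).
    { intros c d [h1 h2]; split. intro h; apply h1, (g_inj _ G), h. apply (g_cpt _ G), h2. }
    assert (He : forall c, is_corner c -> is_corner (bt_perm_inv s c)).
    { unfold is_corner; intros; rewrite (g_num _ G); auto. }
    destruct (Hf (bt_perm_inv s c1, bt_perm_inv s c1', bt_perm_inv s c1'',
                  bt_perm_inv s c2, bt_perm_inv s c2', bt_perm_inv s c2''))
      as [E1 [E2 E3]].
    + repeat split; auto; apply Hcp; auto.
    + intros cv h. simpl in h.
      destruct h as [<-|[<-|[<-|[<-|[<-|[<-|[]]]]]]]; match goal with |- f (fst (bt_perm_inv s ?c, ?v)) = _ => exact (Hin (c, v) ltac:(simpl; auto 7)) end.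
    + repeat split; apply (g_inj _ G); auto.
Qed.
Theorem lemma4p1 (L : Type) (HL : infinite_type L) (f : config L)
  (Hacc : accessible f_solved f) (Hleg : legal f) :
  (forall (g1 g2 : color) (c0 : cell L),
     (forall d, cluster c0 d -> is_edge d) ->
     forall c1 c1' c2 c2' : cell L,
       cluster c0 c1 -> is_edge c1 -> is_edge c1' -> coupled c1 c1' ->
       f c1 = Some g1 -> f c1' = Some g2 ->
       cluster c0 c2 -> is_edge c2 -> is_edge c2' -> coupled c2 c2' ->
       f c2 = Some g1 -> f c2' = Some g2 ->
       c1 = c2 /\ c1' = c2')
  /\
  (forall (g1 g2 g3 : color) (c1 c1' c1'' c2 c2' c2'' : cell L),
     is_corner c1 -> is_corner c1' -> is_corner c1'' ->
     coupled c1 c1' -> coupled c1 c1'' -> coupled c1' c1'' ->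
     f c1 = Some g1 -> f c1' = Some g2 -> f c1'' = Some g3 ->
     is_corner c2 -> is_corner c2' -> is_corner c2'' ->
     coupled c2 c2' -> coupled c2 c2'' -> coupled c2' c2'' ->
     f c2 = Some g1 -> f c2' = Some g2 -> f c2'' = Some g3 ->
     c1 = c2 /\ c1' = c2' /\ c1'' = c2'').
Proof.
  destruct Hacc as [W [lt [sigma [g [Hwo [Hrun ->]]]]]].
  split.
  - intros g1 g2 c0 Hc0 c1 c1' c2 c2' ? ? ? ? ? ? ? ? ? ? ? ?.
    apply (edge_part lt sigma g g1 g2 c0 Hwo Hrun Hc0 (c1, c1', c2, c2')).
    + simpl; tauto.
    + intros cv h; simpl in h; destruct h as [<-|[<-|[<-|[<-|[]]]]]; auto.
  - intros g1 g2 g3 c1 c1' c1'' c2 c2' c2'' ? ? ? ? ? ? ? ? ? ? ? ? ? ? ? ? ? ?.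
    apply (corner_part lt sigma g g1 g2 g3 Hwo Hrun (c1, c1', c1'', c2, c2', c2'')).
    + simpl; tauto.
    + intros cv h; simpl in h; destruct h as [<-|[<-|[<-|[<-|[<-|[<-|[]]]]]]]; auto.
Qed.
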